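(* Let $\mathcal F\subset\mathcal F_X$ be a set of feasible environments. For each decision rule $p$ and each history $h$, $$\inf_{\mu\in\Delta(\mathcal F(h))}\frac{U_p(\mu,h)}{V(\mu,h)}=\inf_{F\in\mathcal F(h)}\frac{U_p(F,h)}{V(F,h)}.$$
   Context: Sequential search model. Fix a discount factor $\delta\in(0,1)$, a Borel set $X\subset\mathbb{R}_+$ with $0\in X$, and an outside option $x_0>0$. Let $\mathcal F_X$ be the set of Borel probability distributions on $X$ with finite mean (''environments''). A history is $h_t=(x_0,x_1,\dots,x_t)$, $t\ge0$, $x_i\in X$, with best-so-far alternative $y_t=\max\{x_0,\dots,x_t\}$. A decision rule $p$ assigns to each history $h$ a stopping probability $p(h)\in[0,1]$. Given an environment $F$ and a history $h_t$, future alternatives are i.i.d. with law $F$; at each round $s\ge t$ the individual stops with probability $p(h_s)$, and stopping at round $s$ yields $\delta^{s-t}y_s$ (never stopping yields $0$). $U_p(F,h)$ is the expected payoff and $V(F,h)=\sup_pU_p(F,h)$. A prior is a finitely supported probability distribution $\mu$ on $\mathcal F$; $\Delta(\mathcal F)$ is the set of priors, each $F\in\mathcal F$ identified with the point mass on it. An environment or prior is consistent with $h_t$ if the sequence $x_1,\dots,x_t$ occurs with positive probability under it; $\mathcal F(h)$ and $\Delta(\mathcal F(h))$ denote the sets of environments and priors consistent with $h$. For $\mu\in\Delta(\mathcal F(h))$, $U_p(\mu,h)=\sum_F\mu(F\mid h)U_p(F,h)$ where $\mu(\cdot\mid h)$ is the Bayesian posterior given $h$, and $V(\mu,h)=\sup_pU_p(\mu,h)$.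 *)

(* Defs.v *)
From HB Require Import structures.
From mathcomp Require Import all_boot all_order all_algebra.
From mathcomp Require Import all_classical all_reals all_analysis.

Unset Printing Implicit Defensive.
Import Order.TTheory GRing.Theory Num.Theory.

Local Open Scope classical_set_scope.
Local Open Scope ring_scope.

Section SequentialSearch.
Context {R : realType}.
Variables (x0 delta : R).

(* An environment: a (Borel) probability distribution on the real line
   (later required to be concentrated on X, with finite mean). *)
Definition env := probability R R.

(* A history h_t = (x_0, x_1, ..., x_t) is represented by the list
   [:: x_1; ...; x_t] (x_0 is the fixed outside option). *)
Definition best (h : seq R) : R := foldr Num.max x0 h.

Definition is_rule (p : seq R -> R) : Prop := forall h, 0 <= p h <= 1.

(* Expected payoff from history h when stopping happens within the next
   n rounds (payoff 0 otherwise), future alternatives i.i.d. F. *)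
Fixpoint Wn (F : env) (p : seq R -> R) (n : nat) (h : seq R) : \bar R :=
  match n with
  | 0%N => (p h * best h)%:E
  | n'.+1 => ((p h * best h)%:E +
              ((1 - p h) * delta)%:E * \int[F]_x Wn F p n' (rcons h x))%E
  end.

(* U_p(F,h): expected payoff (never stopping yields 0), as the monotone
   limit of the horizon-n truncations. *)
Definition U (F : env) (p : seq R -> R) (h : seq R) : \bar R :=
  ereal_sup (range (fun n => Wn F p n h)).

Definition V (F : env) (h : seq R) : \bar R :=
  ereal_sup [set U F p h | p in is_rule].

Definition lik (F : env) (h : seq R) : R :=
  \prod_(x <- h) fine (F [set x]).

(* A finitely supported prior: finitely many environments with weights. *)
Record prior := Prior {
  psize : nat;
  penv : 'I_psize -> env;
  pw : 'I_psize -> R }.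
Arguments penv : clear implicits.
Arguments pw : clear implicits.

Definition is_prior (Fs : set env) (mu : prior) : Prop :=
  (forall i, Fs (penv mu i)) /\ (forall i, 0 <= pw mu i) /\
  \sum_(i < psize mu) pw mu i = 1.

Definition mlik (mu : prior) (h : seq R) : R :=
  \sum_(i < psize mu) pw mu i * lik (penv mu i) h.

Definition post (mu : prior) (h : seq R) (i : 'I_(psize mu)) : R :=
  pw mu i * lik (penv mu i) h / mlik mu h.

Definition Umu (mu : prior) (p : seq R -> R) (h : seq R) : \bar R :=
  (\sum_(i < psize mu) (post mu h i)%:E * U (penv mu i) p h)%E.

Definition Vmu (mu : prior) (h : seq R) : \bar R :=
  ereal_sup [set Umu mu p h | p in is_rule].

Definition pratio (a b : \bar R) : \bar R := (fine a / fine b)%:E.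

Definition consistent_envs (Fs : set env) (h : seq R) : set env :=
  [set F | Fs F /\ 0 < lik F h].

Definition consistent_priors (Fs : set env) (h : seq R) : set prior :=
  [set mu | is_prior Fs mu /\ 0 < mlik mu h].

End SequentialSearch.

(* Main.v *)
Require Import Defs.
From HB Require Import structures.
From mathcomp Require Import all_boot all_order all_algebra.
From mathcomp Require Import all_classical all_reals all_analysis.
From mathcomp Require Import ring lra.
Import Order.TTheory GRing.Theory Num.Theory.
Local Open Scope classical_set_scope.
Local Open Scope ring_scope.

Section Proof_sec.
Context {R : realType}.
Local Open Scope ereal_scope.

Lemma le_int_nm (F : probability R R) (f g : R -> \bar R) :
  (forall x, 0 <= f x) -> (forall x, f x <= g x) ->
  \int[F]_x f x <= \int[F]_x g x.
Proof.
move=> f0 fg.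
have g0 : forall x, 0 <= g x by move=> x; exact: le_trans (f0 x) (fg x).
rewrite !ge0_integralTE//.
apply: ereal_sup_le => _ [s Hs <-]; exists s => //= x.
exact: le_trans (Hs x) (fg x).
Qed.

Variables (x0 delta : R).
Hypothesis hd' : (0 < delta < 1)%R.
Let hd : (0 <= delta <= 1)%R.
Proof. by case/andP: hd' => a b; rewrite ltW // ltW. Qed.
Hypothesis hx0 : (0 < x0)%R.

Lemma best_ge h : (x0 <= best x0 h)%R.
Proof. rewrite /best; elim: h => [|a h IH] /=; first by []. by rewrite le_max IH orbT. Qed.

Lemma best_rcons h x : best x0 (rcons h x) = Num.max (best x0 h) x.
Proof.
rewrite /best; elim: h => [|a h IH] /=; first by rewrite maxC.
by rewrite IH maxA.
Qed.

Lemma Wn_ge0 F p n h : is_rule p -> 0 <= Wn x0 delta F p n h.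
Proof.
move=> hp; elim: n h => [|n IH] h /=; have /andP[p0 p1] := hp h;
  have b0 : (0 <= best x0 h)%R by apply: le_trans (best_ge h); exact: ltW.
  by rewrite lee_fin mulr_ge0.
apply: adde_ge0; first by rewrite lee_fin mulr_ge0.
apply: mule_ge0; first by rewrite lee_fin mulr_ge0 ?subr_ge0 //; case/andP: hd.
by apply: integral_ge0 => x _; exact: IH.
Qed.

Lemma Wn_le (F : env) p n h m K :
  is_rule p -> F.-integrable setT (fun x => x%:E) ->
  \int[F]_x `|x%:E| = m%:E -> (delta * (m + K) <= K)%R -> (0 <= K)%R ->
  Wn x0 delta F p n h <= (best x0 h + K)%:E.
Proof.
move=> hp Fi Fm hK K0.
have /integrableP[mabs _] := integrable_abse Fi.
elim: n h => [|n IH] h /=; have /andP[p0 p1] := hp h;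
  have b0 : (0 <= best x0 h)%R by apply: le_trans (best_ge h); exact: ltW.
  by rewrite lee_fin; nra.
set b := best x0 h.
have HI : \int[F]_x Wn x0 delta F p n (rcons h x) <= (b + K + m)%:E.
  apply: (@le_trans _ _ (\int[F]_x ((b + K)%:E + `|x%:E|))).
    apply: le_int_nm => x; first exact: Wn_ge0.
    apply: le_trans (IH _) _; rewrite best_rcons -/b /= lee_fin.
    rewrite addrAC lerD2r ge_max lerDl normr_ge0 /=.
    by rewrite -[X in (X <= _)%R]add0r lerD ?ler_norm.
  rewrite ge0_integralD //; last by move=> *; rewrite lee_fin addr_ge0.
  have := integral_cst F (@measurableT _ R) ((b + K)%:E); rewrite /cst => ->.
  rewrite [X in _ * X + _](_ : _ = 1); last exact: probability_setT.
  by rewrite mule1 Fm -EFinD.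
have c0 : (0 <= (1 - p h) * delta)%R by rewrite mulr_ge0 ?subr_ge0 //; case/andP: hd.
apply: le_trans (leeD2l _ (lee_wpmul2l _ HI)) _; first by rewrite lee_fin.
rewrite -EFinM -EFinD lee_fin.
case/andP: hd => d0 d1.
have e1 : (0 <= (1 - p h) * (b * (1 - delta)))%R by rewrite !mulr_ge0 ?subr_ge0.
have e2 : (0 <= (1 - p h) * (K - delta * (m + K)))%R by rewrite !mulr_ge0 ?subr_ge0.
nra.
Qed.

Lemma UV_bound (F : env) h : F.-integrable setT (fun x => x%:E) ->
  exists B : R, forall p, is_rule p -> U x0 delta F p h <= B%:E.
Proof.
move=> Fi.
have /integrableP[_ fin] := Fi.
have ge0 : 0 <= \int[F]_x `|x%:E| by apply: integral_ge0 => x _.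
set m := fine (\int[F]_x `|x%:E|).
have Fm : \int[F]_x `|x%:E| = m%:E by rewrite /m fineK // ge0_fin_numE.
case/andP: hd' => d0 d1.
have d1' : (0 < 1 - delta)%R by rewrite subr_gt0.
have m0 : (0 <= m)%R by rewrite /m fine_ge0.
pose K := (delta * m / (1 - delta))%R.
have K0 : (0 <= K)%R by rewrite /K divr_ge0 ?mulr_ge0 // ltW.
have hK : (delta * (m + K) <= K)%R.
  have : (K * (1 - delta) = delta * m)%R by rewrite /K mulfVK // gt_eqF.
  nra.
exists (best x0 h + K)%R => p hp.
apply: ge_ereal_sup => _ [n _ <-]; exact: (@Wn_le F p n h m K hp Fi Fm hK K0).
Qed.

Lemma U_ge p F h n : Wn x0 delta F p n h <= U x0 delta F p h.
Proof. by apply: ereal_sup_ubound; exists n. Qed.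

Lemma U_ge0 p F h : is_rule p -> 0 <= U x0 delta F p h.
Proof. move=> hp; exact: le_trans (@Wn_ge0 F p 0 h hp) (U_ge p F h 0). Qed.

Lemma U_le_V p F h : is_rule p -> U x0 delta F p h <= V x0 delta F h.
Proof. by move=> hp; apply: ereal_sup_ubound; exists p. Qed.

Lemma V_le (F : env) h : F.-integrable setT (fun x => x%:E) ->
  exists B : R, V x0 delta F h <= B%:E.
Proof.
move=> Fi; have [B HB] := UV_bound F h Fi; exists B.
by apply: ge_ereal_sup => _ [p hp <-]; exact: HB.
Qed.

Lemma one_rule : is_rule (fun _ : seq R => (1 : R)%R).
Proof. by move=> h; rewrite lexx ler01. Qed.

Lemma V_ge F h : (best x0 h)%:E <= V x0 delta F h.
Proof.
apply: le_trans (U_le_V (fun _ : seq R => (1:R)%R) F h one_rule).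
by apply: le_trans (U_ge _ F h 0); rewrite /= mul1r.
Qed.

Lemma U_fin p (F : env) h : F.-integrable setT (fun x => x%:E) -> is_rule p ->
  U x0 delta F p h = (fine (U x0 delta F p h))%:E.
Proof.
move=> Fi hp; have [B HB] := UV_bound F h Fi.
rewrite fineK // ge0_fin_numE ?U_ge0 //.
exact: le_lt_trans (HB p hp) (ltry _).
Qed.

Lemma V_fin (F : env) h : F.-integrable setT (fun x => x%:E) ->
  V x0 delta F h = (fine (V x0 delta F h))%:E.
Proof.
move=> Fi; have [B HB] := V_le F h Fi.
have V0 : 0 <= V x0 delta F h.
  apply: le_trans (V_ge F h); rewrite lee_fin; apply: le_trans (best_ge h); exact: ltW.
rewrite fineK // ge0_fin_numE //.
exact: le_lt_trans HB (ltry _).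
Qed.

Lemma lik_ge0 (F : @env R) h : (0 <= lik F h)%R.
Proof. by apply: prodr_ge0 => x _; apply: fine_ge0; exact: measure_ge0. Qed.

Section prior.
Variables (Fs : set (@env R)) (mu : @prior R) (h : seq R).
Hypothesis Hmu : is_prior Fs mu.
Hypothesis Hm : (0 < mlik mu h)%R.
Hypothesis Hint : forall F, Fs F -> F.-integrable setT (fun x => x%:E).

Lemma post_ge0 i : (0 <= post mu h i)%R.
Proof.
case: Hmu => _ [Hw _].
by rewrite /post divr_ge0 ?mulr_ge0 ?lik_ge0 // ltW.
Qed.

Lemma sum_post : (\sum_(i < psize mu) post mu h i = 1)%R.
Proof. by rewrite /post -mulr_suml divff // gt_eqF. Qed.

Lemma post0 i : ~ (0 < lik (penv mu i) h)%R -> post mu h i = 0%R.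
Proof.
move=> H; have : lik (penv mu i) h = 0%R.
  by apply/eqP; rewrite eq_le lik_ge0 andbT leNgt; apply/negP.
by rewrite /post => ->; rewrite mulr0 mul0r.
Qed.

Lemma Umu_E q : is_rule q -> Umu x0 delta mu q h =
  (\sum_(i < psize mu) post mu h i * fine (U x0 delta (penv mu i) q h))%:E.
Proof.
move=> hq; rewrite /Umu -sumEFin; apply: eq_bigr => i _.
case: Hmu => HF _.
by rewrite [RHS]EFinM -U_fin // Hint.
Qed.

Lemma Vmu_ub : Vmu x0 delta mu h <=
  (\sum_(i < psize mu) post mu h i * fine (V x0 delta (penv mu i) h))%:E.
Proof.
apply: ge_ereal_sup => _ [q hq <-]; rewrite Umu_E // lee_fin.
apply: ler_sum => i _; apply: ler_wpM2l; first exact: post_ge0.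
case: Hmu => HF _.
by rewrite -lee_fin -U_fin ?Hint // -V_fin ?Hint // U_le_V.
Qed.

Lemma Vmu_lb : (best x0 h)%:E <= Vmu x0 delta mu h.
Proof.
apply: le_trans (ereal_sup_ubound _); last first.
  by exists (fun _ : seq R => (1:R)%R); [exact: one_rule|reflexivity].
rewrite (Umu_E _ one_rule) lee_fin.
rewrite -[X in (X <= _)%R]mul1r -[X in (X * _ <= _)%R]sum_post mulr_suml.
apply: ler_sum => i _; apply: ler_wpM2l; first exact: post_ge0.
case: Hmu => HF _.
rewrite -lee_fin -U_fin ?Hint ?one_rule //.
  by apply: le_trans (U_ge _ _ h 0); rewrite /= ?mul1r.
exact: one_rule.
Qed.
End prior.

Lemma main (Fs : set (@env R)) (p : seq R -> R) (h : seq R) :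
  (forall F, Fs F -> F.-integrable setT (fun x => x%:E)) ->
  is_rule p ->
  ereal_inf [set pratio (Umu x0 delta mu p h) (Vmu x0 delta mu h)
            | mu in consistent_priors Fs h]
  = ereal_inf [set pratio (U x0 delta F p h) (V x0 delta F h)
              | F in consistent_envs Fs h].
Proof.
move=> Hint hp; apply/eqP; rewrite eq_le; apply/andP; split.
  apply: ereal_inf_le_tmp => _ [F [FF lF] <-].
  have Ue : forall q, Umu x0 delta (@Prior R 1 (fun _ => F) (fun _ => 1%R)) q h
      = U x0 delta F q h.
    move=> q; rewrite /Umu big_ord1 /post /mlik big_ord1 /= mul1r divff ?gt_eqF //.
    by rewrite mul1e.
  exists (@Prior R 1 (fun _ => F) (fun _ => 1%R)).
    split; last by rewrite /mlik big_ord1 /= mul1r.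
    split => //; split => //; by rewrite big_ord1.
  congr pratio; first exact: Ue.
  rewrite /Vmu /V; congr ereal_sup; apply: eq_imagel => q _; exact: Ue.
apply: le_ereal_inf_tmp => _ [mu [[HF [Hw Hs]] Hm] <-].
have Hmu : is_prior Fs mu by [].
have [i Hi] : exists i, (0 < lik (penv mu i) h)%R.
  case: (pselect (exists i, (0 < lik (penv mu i) h)%R)) => // Hn; exfalso.
  have : (mlik mu h <= 0)%R.
    rewrite /mlik; apply: sumr_le0 => j _; apply: mulr_ge0_le0 => //.
    rewrite leNgt; apply/negP => H; apply: Hn; by exists j.
  by rewrite leNgt Hm.
set r := ereal_inf _.
have hr : forall j, (0 < lik (penv mu j) h)%R ->
    r <= pratio (U x0 delta (penv mu j) p h) (V x0 delta (penv mu j) h).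
  by move=> j Hj; apply: ereal_inf_lbound; exists (penv mu j).
have hri := hr i Hi.
clearbody r; move: hr hri; case: r => [rho| |] hr hri; last by rewrite leNye.
  have Hint' : forall j, (penv mu j).-integrable setT (fun x => x%:E).
    by move=> j; apply: Hint.
  have vpos : forall j, (0 < fine (V x0 delta (penv mu j) h))%R.
    move=> j; apply: lt_le_trans hx0 _; apply: le_trans (best_ge h) _.
    by rewrite -lee_fin -V_fin // V_ge.
  have bpos : (0 < best x0 h)%R by apply: lt_le_trans hx0 (best_ge h).
  set c := fine (Vmu x0 delta mu h).
  have Vlb := @Vmu_lb Fs mu h Hmu Hm Hint.
  have Vub := @Vmu_ub Fs mu h Hmu Hm Hint.
  have Ve : Vmu x0 delta mu h = c%:E.
    rewrite /c fineK // ge0_fin_numE; last first.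
      by apply: le_trans Vlb; rewrite lee_fin ltW.
    exact: le_lt_trans Vub (ltry _).
  have c0 : (0 < c)%R by rewrite -lte_fin -Ve; exact: lt_le_trans Vlb; rewrite lte_fin.
  have cub : (c <= \sum_(j < psize mu) post mu h j * fine (V x0 delta (penv mu j) h))%R.
    by rewrite -lee_fin -Ve.
  rewrite /pratio Ve (@Umu_E Fs mu h Hmu Hint _ hp) /= lee_fin ler_pdivlMr //.
  have a0 : (0 <= \sum_(j < psize mu) post mu h j * fine (U x0 delta (penv mu j) p h))%R.
    apply: sumr_ge0 => j _; apply: mulr_ge0; first exact: (@post_ge0 Fs mu h Hmu Hm).
    by apply: fine_ge0; exact: U_ge0.
  have [rho0|rho0] := leP rho 0%R.
    by apply: le_trans a0; apply: mulr_le0_ge0 => //; exact: ltW.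
  apply: le_trans (ler_wpM2l (ltW rho0) cub) _.
  rewrite mulr_sumr; apply: ler_sum => j _.
  case: (pselect (0 < lik (penv mu j) h)%R) => Hj; last first.
    by rewrite (@post0 mu h j Hj) !mul0r mulr0.
  rewrite mulrCA; apply: ler_wpM2l; first exact: (@post_ge0 Fs mu h Hmu Hm).
  have := hr j Hj; rewrite /pratio lee_fin ler_pdivlMr //.
by move: hri; rewrite /pratio leye_eq.
Qed.
End Proof_sec.

Theorem proposition1 (R : realType) (delta x0 : R) (X : set R)
  (Fs : set (@env R)) (p : seq R -> R) (h : seq R) :
  0 < delta < 1 ->
  measurable X -> X `<=` [set x | 0 <= x] -> X 0 ->
  0 < x0 ->
  (forall F, Fs F -> F X = 1%E /\ F.-integrable setT (fun x => x%:E)) ->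
  is_rule p ->
  (forall x, x \in h -> X x) ->
  ereal_inf [set pratio (Umu x0 delta mu p h) (Vmu x0 delta mu h)
            | mu in consistent_priors Fs h]
  = ereal_inf [set pratio (U x0 delta F p h) (V x0 delta F h)
              | F in consistent_envs Fs h].
Proof.
move=> hd _ _ _ hx0 HF hp _.
apply: (@main R x0 delta hd hx0 Fs p h) => //.
  by move=> F /HF [].
Qed.
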